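(* Let $G$ be an extraspecial $p$-group of order $p^{2n+1}$ ($p$ prime, $n\ge1$). Then $$A_G(t)=\frac{1}{p^{2n+1}}\left(\frac{p}{1-p^{2n+1}t}+\frac{p^{2n+1}-p}{1-p^{2n}t}\right).$$
   Context: A finite $p$-group $G$ is extraspecial if $Z(G)=G'$ has order $p$ and $G/Z(G)$ is elementary abelian. For a finite group $G$ and $n\ge0$, let $\alpha_{G,n}$ be the number of orbits of $G$ acting on $G^n$ by simultaneous conjugation, and $A_G(t)=\sum_{n\ge0}\alpha_{G,n}t^n$. *)

(* Defs.v *)
From HB Require Import structures.
From mathcomp Require Import all_boot all_order all_algebra all_fingroup all_solvable.
Set Implicit Arguments. Unset Strict Implicit. Unset Printing Implicit Defensive.

Local Open Scope group_scope.

Definition sconj_orbit (gT : finGroupType) (G : {group gT}) (n : nat)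
    (x : {ffun 'I_n -> gT}) : {set {ffun 'I_n -> gT}} :=
  [set [ffun i => x i ^ g] | g in G].

Definition alpha (gT : finGroupType) (G : {group gT}) (n : nat) : nat :=
  #|[set sconj_orbit G x | x in [set x : {ffun 'I_n -> gT} | [forall i, x i \in G]]]|.

(* Main.v *)
Require Import Defs.
From HB Require Import structures.
From mathcomp Require Import all_boot all_order all_algebra all_fingroup all_solvable.
Import GRing.Theory Num.Theory.
Section Helpers.
Set Implicit Arguments. Unset Strict Implicit. Unset Printing Implicit Defensive.
Local Open Scope group_scope.

Section Act.
Variables (gT : finGroupType) (k : nat).
Definition tconj (x : {ffun 'I_k -> gT}) (g : gT) : {ffun 'I_k -> gT} :=
  [ffun i => x i ^ g].
Lemma tconj1 x : tconj x 1 = x.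
Proof. by apply/ffunP=> i; rewrite ffunE conjg1. Qed.
Lemma tconjM x a b : tconj x (a * b) = tconj (tconj x a) b.
Proof. by apply/ffunP=> i; rewrite !ffunE conjgM. Qed.
Definition tconj_action := TotalAction tconj1 tconjM.
End Act.

Lemma burnside_alpha (gT : finGroupType) (G : {group gT}) k :
  (alpha G k * #|G| = \sum_(a in G) #|'C_G[a]| ^ k)%N.
Proof.
pose S := [set x : {ffun 'I_k -> gT} | [forall i, x i \in G]].
pose to := tconj_action gT k.
have actS : [acts G, on S | to].
  apply/subsetP=> a Ga; rewrite !inE /=; apply/subsetP=> x; rewrite !inE.
  move=> /forallP Hx; apply/forallP=> i; rewrite ffunE groupJ //.
have -> : alpha G k = #|orbit to G @: S| by [].
rewrite -(Frobenius_Cauchy actS); apply: eq_bigr => a Ga.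
rewrite -[X in (_ ^ X)%N](card_ord k) -card_ffun_on; apply: eq_card => x.
rewrite in_setI; apply/andP/ffun_onP.
  case; rewrite inE => /forallP Hx /afix1P Hfix i; rewrite inE Hx /=; apply/cent1P.
  have := congr1 (fun f : {ffun 'I_k -> gT} => f i) Hfix; rewrite /= ffunE => /conjg_fixP.
  by move/commgP; rewrite /commute.
move=> H; split.
  by rewrite inE; apply/forallP=> i; have := H i; rewrite inE => /andP[].
apply/afix1P/ffunP=> i; rewrite /= ffunE; have := H i; rewrite inE => /andP[_ /cent1P].
by move=> c; apply/conjg_fixP/commgP.
Qed.

End Helpers.

Theorem lemma7p7 (gT : finGroupType) (G : {group gT}) (p n : nat) :
  prime p -> (p.-group G)%g -> extraspecial G -> #|G| = (p ^ (2 * n + 1))%N -> (1 <= n)%N ->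
  forall k : nat,
    (((alpha G k)%:R : rat) =
      (p%:R * (p ^ (2 * n + 1))%:R ^+ k
       + ((p ^ (2 * n + 1))%:R - p%:R) * (p ^ (2 * n))%:R ^+ k)
      / (p ^ (2 * n + 1))%:R)%R.
Proof.
move=> pr_p pG esG oG n1 k.
have oZ : #|'Z(G)%g| = p := card_center_extraspecial pG esG.
have pp : (0 < p)%N := prime_gt0 pr_p.
have cC : forall a, a \in G -> a \notin 'Z(G)%g -> #|'C_G[a]%g| = (p ^ (2 * n))%N.
  move=> a Ga nZa.
  have := p_maximal_index pG (cent1_extraspecial_maximal esG Ga nZa).
  move=> iC; have := Lagrange (subsetIl G 'C[a]%g); rewrite iC oG.
  rewrite addn1 expnS mulnC => /eqP; rewrite eqn_pmul2l // => /eqP //.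
have cZ : forall a, a \in 'Z(G)%g -> #|'C_G[a]%g| = #|G|.
  move=> a Za; rewrite (setIidPl _) //; rewrite -cent_set1 centsC sub1set.
  by move: Za; rewrite inE => /andP[].
have sZG : 'Z(G)%g \subset G := center_sub G.
have H : (alpha G k * #|G| = p * #|G| ^ k + (#|G| - p) * (p ^ (2 * n)) ^ k)%N.
  rewrite burnside_alpha (bigID (fun a => a \in 'Z(G)%g)) /=.
  congr (_ + _)%N.
    rewrite (eq_bigr (fun _ => #|G| ^ k)%N); last by move=> a /andP[_ /cZ ->].
    rewrite sum_nat_const -oZ; congr (_ * _)%N; apply: eq_card => a.
    rewrite -topredE /=; apply/andP/idP => [[]//|Za]; by rewrite (subsetP sZG).
  rewrite (eq_bigr (fun _ => (p ^ (2 * n)) ^ k)%N); last by move=> a /andP[Ga /cC ->].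
  rewrite sum_nat_const -oZ; congr (_ * _)%N.
  rewrite -(cardsID 'Z(G)%g G) (setIidPr sZG) addKn.
  by apply: eq_card => a; rewrite -topredE /= !inE andbC.
have pq : (p <= p ^ (2 * n + 1))%N.
  by rewrite -{1}(expn1 p) leq_exp2l ?prime_gt1 // addn1.
have Hr : ((alpha G k)%:R * (p ^ (2 * n + 1))%:R = 
      (p%:R * (p ^ (2 * n + 1))%:R ^+ k
       + ((p ^ (2 * n + 1))%:R - p%:R) * (p ^ (2 * n))%:R ^+ k) :> rat)%R.
  by rewrite -natrM -oG H natrD !natrM !natrX natrB ?oG.
rewrite -Hr mulfK // pnatr_eq0 expn_eq0 negb_and -lt0n pp orTb //.
Qed.
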